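(* Let $n\in\mathbb{N}_0$, $k\in\mathbb{N}$ and $\lambda\in\mathbb{C}\setminus\{0\}$. Then $$E_{n}^{\ast(-k)}(\lambda)=\frac{k!\,2^{n-k}}{\lambda^{k}}\,y_{3}\!\left(n,k;\lambda^{2};\frac12,-\frac12\right).$$
   Context: For $k\in\mathbb{N}_0$ and $\lambda\ne0$, the second kind Apostol type Euler numbers of order $-k$ are defined by $$\left(\frac{\lambda e^{t}+\lambda^{-1}e^{-t}}{2}\right)^{k}=\sum_{n=0}^{\infty}E_{n}^{\ast(-k)}(\lambda)\frac{t^{n}}{n!}.$$ For $a,b\in\mathbb{R}$, $\mu\in\mathbb{C}$, $k\in\mathbb{N}_0$, the numbers $y_3(n,k;\mu;a,b)$ are defined by $\frac{e^{bkt}}{k!}(\mu e^{(a-b)t}+1)^{k}=\sum_{n\ge0}y_{3}(n,k;\mu;a,b)\frac{t^{n}}{n!}$. *)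

(* Defs.v *)
From HB Require Import structures.
From mathcomp Require Import all_boot all_order all_algebra.
From mathcomp Require Import reals.
From mathcomp Require Export complex.
Set Implicit Arguments. Unset Strict Implicit. Unset Printing Implicit Defensive.
Import Order.TTheory GRing.Theory Num.Theory.
Local Open Scope ring_scope.

(* Formal exponential generating functions over a ring K:
   f represents sum_n f n * t^n / n!. *)
Section EGF.
Variable K : comNzRingType.
Definition egf := nat -> K.
Definition egf_one : egf := fun n => (n == 0)%:R.
Definition egf_exp (a : K) : egf := fun n => a ^+ n.
Definition egf_add (f g : egf) : egf := fun n => f n + g n.
Definition egf_scale (c : K) (f : egf) : egf := fun n => c * f n.
(* product of EGFs = binomial convolution of coefficients *)
Definition egf_mul (f g : egf) : egf :=
  fun n => \sum_(i < n.+1) 'C(n, i)%:R * f i * g (n - i)%N.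
Definition egf_pow (f : egf) (k : nat) : egf := iter k (egf_mul f) egf_one.
End EGF.

(* E_n^{*(-k)}(lambda): ((lambda e^t + lambda^{-1} e^{-t})/2)^k
   = sum_n E_n^{*(-k)}(lambda) t^n/n! *)
Definition Estar_neg {R : realType} (n k : nat) (lam : R[i]) : R[i] :=
  egf_pow (egf_scale (2^-1)
             (egf_add (egf_scale lam (egf_exp 1))
                      (egf_scale lam^-1 (egf_exp (-1))))) k n.

(* y_3(n,k;mu;a,b): e^{bkt}/k! (mu e^{(a-b)t} + 1)^k = sum_n y_3 t^n/n!,
   with a, b real, mu complex. *)
Definition y3 {R : realType} (n k : nat) (mu : R[i]) (a b : R) : R[i] :=
  egf_scale (k`!%:R^-1)
    (egf_mul (egf_exp ((b *+ k)%:C)%C)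
             (egf_pow (egf_add (egf_scale mu (egf_exp ((a - b)%:C)%C)) (egf_one _)) k)) n.

(* Main.v *)
Require Import Defs.
From HB Require Import structures.
From mathcomp Require Import all_boot all_order all_algebra.
From mathcomp Require Import reals complex.
From mathcomp Require Import ring.
Import Order.TTheory GRing.Theory Num.Theory.
Local Open Scope ring_scope.

Section Gen.
Variable K : comNzRingType.

Lemma egf_mul_addl (f g h : egf K) n :
  egf_mul (egf_add f g) h n = egf_mul f h n + egf_mul g h n.
Proof.
rewrite /egf_mul /egf_add -big_split; apply: eq_bigr => i _ /=.
by rewrite mulrDr mulrDl.
Qed.

Lemma egf_mul_scalel c (f h : egf K) n :
  egf_mul (egf_scale c f) h n = c * egf_mul f h n.
Proof.
rewrite /egf_mul /egf_scale mulr_sumr; apply: eq_bigr => i _; ring.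
Qed.

Lemma egf_mul_extr (f : egf K) n (g g' : egf K) :
  g =1 g' -> egf_mul f g n = egf_mul f g' n.
Proof. by move=> e; apply: eq_bigr => i _; rewrite e. Qed.

Lemma egf_pow_ext (f g : egf K) k : f =1 g -> egf_pow f k =1 egf_pow g k.
Proof.
move=> e; elim: k => [|k IH] n //=.
rewrite /egf_mul; apply: eq_bigr => i _; by rewrite e -/(egf_pow f k) -/(egf_pow g k) IH.
Qed.

Lemma egf_mul_expl (a : K) (I : Type) (S : seq I) (w b : I -> K) n :
  egf_mul (egf_exp a) (fun m => \sum_(s <- S) w s * b s ^+ m) n
  = \sum_(s <- S) w s * (a + b s) ^+ n.
Proof.
rewrite /egf_mul /egf_exp.
under eq_bigr do rewrite mulr_sumr.
rewrite exchange_big /=; apply: eq_bigr => s _.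
rewrite addrC exprDn mulr_sumr; apply: eq_bigr => i _.
rewrite -mulr_natl; ring.
Qed.

Fixpoint allseqs k : seq (seq bool) :=
  if k is k'.+1 then map (cons true) (allseqs k') ++ map (cons false) (allseqs k')
  else [:: [::]].

Lemma size_allseqs k s : s \in allseqs k -> size s = k.
Proof.
elim: k s => [|k IH] s /=; first by rewrite inE => /eqP ->.
rewrite mem_cat => /orP [] /mapP [t Ht ->] /=; by rewrite IH.
Qed.

Lemma egf_pow_closed (c1 c2 a1 a2 : K) k n :
  egf_pow (egf_add (egf_scale c1 (egf_exp a1)) (egf_scale c2 (egf_exp a2))) k n =
  \sum_(s <- allseqs k) (\prod_(x <- s) (if x then c1 else c2))
     * (\sum_(x <- s) (if x then a1 else a2)) ^+ n.
Proof.
elim: k n => [|k IH] n.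
  by rewrite /= big_seq1 !big_nil mul1r /egf_pow /= /egf_one expr0n.
rewrite /egf_pow /= -/(egf_pow _ k).
rewrite egf_mul_addl !egf_mul_scalel !(egf_mul_extr _ _ _ _ IH) !egf_mul_expl.
rewrite big_cat !big_map !mulr_sumr; congr (_ + _); apply: eq_bigr => s _;
  rewrite !big_cons /=; ring.
Qed.

End Gen.

Theorem mainTheorem7 (R : realType) (n k : nat) (lam : R[i]) :
  (0 < k)%N -> lam != 0 ->
  Estar_neg n k lam =
    (k`!)%:R * (2 : R[i]) ^ (n%:Z - k%:Z) / lam ^+ k
      * y3 n k (lam ^+ 2) (1 / 2) (- (1 / 2)).
Proof.
move=> _ lam0.
have h2 : (2 : R[i]) != 0 by rewrite pnatr_eq0.
have hk : (k`!%:R : R[i]) != 0 by rewrite pnatr_eq0 -lt0n fact_gt0.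
rewrite /Estar_neg (@egf_pow_ext _ _ (egf_add (egf_scale (2^-1 * lam) (egf_exp 1))
    (egf_scale (2^-1 * lam^-1) (egf_exp (-1))))); last first.
  by move=> m; rewrite /egf_scale /egf_add mulrDr !mulrA.
rewrite egf_pow_closed /y3 /egf_scale.
rewrite (@egf_mul_extr _ _ _ _ (fun m => \sum_(s <- allseqs k)
   (\prod_(x <- s) (if x then lam ^+ 2 else 1))
   * (\sum_(x <- s) (if x then ((1 / 2 : R) - - (1 / 2))%:C%C else 0)) ^+ m)); last first.
  move=> m; rewrite -egf_pow_closed; apply: egf_pow_ext => j.
  rewrite /egf_add /egf_scale /egf_one /egf_exp /= expr0n; ring.
rewrite egf_mul_expl !mulr_sumr; apply: eq_big_seq => s /size_allseqs Hs.
have hh : ((2^-1 : R)%:C)%C = 2^-1 by rewrite fmorphV rmorph_nat.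
have ha : (((1 / 2 : R) - - (1 / 2))%:C)%C = 1.
  have -> : ((1 / 2 : R) - - (1 / 2)) = 1.
    by field.
  exact: rmorph1.
have he : (((- (1 / 2) : R) *+ k)%:C)%C = - (2^-1 *+ k).
  have e12 : (1 / 2 : R) = 2^-1 by field.
  by rewrite e12 rmorphMn rmorphN fmorphV rmorph_nat mulNrn.
rewrite ha he.
have hP : \prod_(x <- s) (if x then 2^-1 * lam else 2^-1 * lam^-1)
   = (\prod_(x <- s) (if x then lam ^+ 2 else 1)) / (2 * lam) ^+ size s.
  elim: s {Hs} => [|x s IH]; first by rewrite !big_nil expr0 invr1 mulr1.
  have hq : (2 * lam) ^+ size s != 0 by rewrite expf_neq0 // mulf_neq0.
  rewrite !big_cons IH /= [(2 * lam) ^+ _.+1]exprS; case: x => /=; field; by rewrite ?hq ?lam0 ?h2.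
have hS : \sum_(x <- s) (if x then 1 else -1)
   = 2 * (- (2^-1 *+ size s) + \sum_(x <- s) (if x then (1 : R[i]) else 0)).
  elim: s {Hs hP} => [|x s IH]; first by rewrite !big_nil mulr0n oppr0 addr0 mulr0.
  rewrite !big_cons IH /= mulrS; case: x => /=; field; by rewrite ?h2.
rewrite hP hS Hs exprMn.
rewrite expfzDr // -exprnN.
have -> : (2 : R[i]) ^ (n%:Z) = 2 ^+ n by [].
move: (\prod_(x <- s) _) (2^-1 *- k + _) => P E.
rewrite exprMn; field; by rewrite hk !expf_neq0.
Qed.
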